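(* A quantum channel $\mathcal P$ on $S$ satisfies $\mathcal P(\mathsf{St}(S))=\mathsf P(S)$ if and only if there exists an orthonormal basis $\{|\psi_j\rangle\}_{j=1}^d$ of $\mathbb C^d$ such that $\mathcal P(\rho)=\sum_{j=1}^d\langle\psi_j|\rho|\psi_j\rangle\,\tau_j$ for all $\rho$.
   Context: $S$ is a $d$-dimensional quantum system with non-degenerate Hamiltonian $H=\sum_i E_i|i\rangle\langle i|$, $E_1<\dots<E_d$. $\mathsf{St}(S)$ is the set of density matrices; $\mathsf P(S)$ is the set of passive states, i.e. states $\sum_i p_i|i\rangle\langle i|$ with $p_1\ge\dots\ge p_d$. For $j=1,\dots,d$, $\tau_j=\frac1j\sum_{i=1}^j|i\rangle\langle i|$. *)

(* Defs.v *)
From HB Require Import structures.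
From mathcomp Require Import all_boot all_order all_algebra.
Set Implicit Arguments. Unset Strict Implicit. Unset Printing Implicit Defensive.
Import Order.TTheory GRing.Theory Num.Theory.
Local Open Scope ring_scope.
Local Open Scope sesquilinear_scope.

Section QDefs.
Context {C : numClosedFieldType}.

Definition psdF (T : finType) (M : T -> T -> C) : Prop :=
  (forall x y, M x y = (M y x)^*) /\
  (forall v : T -> C, 0 <= \sum_x \sum_y (v x)^* * M x y * v y).

Definition psdmx (d : nat) (A : 'M[C]_d) : Prop := psdF (fun i j => A i j).

(* Complete positivity: for every n, id_n (x) P maps PSD operators on
   C^n (x) C^d (indexed by 'I_n * 'I_d, blocks X a b) to PSD operators. *)
Definition completely_positive (d : nat) (P : 'M[C]_d -> 'M[C]_d) : Prop :=
  forall (n : nat) (X : 'I_n -> 'I_n -> 'M[C]_d),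
    psdF (fun p q : 'I_n * 'I_d => X p.1 q.1 p.2 q.2) ->
    psdF (fun p q : 'I_n * 'I_d => P (X p.1 q.1) p.2 q.2).

Definition quantum_channel (d : nat) (P : 'M[C]_d -> 'M[C]_d) : Prop :=
  [/\ linear P, (forall A, \tr (P A) = \tr A) & completely_positive P].

Definition is_state (d : nat) (rho : 'M[C]_d) : Prop := psdmx rho /\ \tr rho = 1.

(* P(S): passive states, diagonal in the energy basis (standard basis, index
   order = increasing energy) with nonincreasing populations. *)
Definition passive (d : nat) (rho : 'M[C]_d) : Prop :=
  is_state rho /\
  exists p : 'I_d -> C, rho = diag_mx (\row_i p i) /\
                        (forall i j : 'I_d, (i <= j)%N -> p j <= p i).

(* tau_j = (1/j) sum_{i<=j} |i><i| ; here j is 0-based, so the paper's tau_{j+1}. *)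
Definition tau (d : nat) (j : 'I_d) : 'M[C]_d :=
  (j.+1%:R)^-1 *: \sum_(i < d | (i <= j)%N) delta_mx i i.

Definition orthonormal_basis (d : nat) (psi : 'I_d -> 'cV[C]_d) : Prop :=
  forall i j, (psi i)^t* *m psi j = (i == j)%:R%:M.

Definition expval (d : nat) (psi : 'cV[C]_d) (rho : 'M[C]_d) : C :=
  ((psi^t* *m rho *m psi) ord0 ord0).

End QDefs.

(* Main.v *)
Require Import Defs.
From HB Require Import structures.
From mathcomp Require Import all_boot all_order all_algebra ring.
Import Order.TTheory GRing.Theory Num.Theory.
Local Open Scope ring_scope.
Local Open Scope sesquilinear_scope.
Set Implicit Arguments. Unset Strict Implicit. Unset Printing Implicit Defensive.

Section Basic.
Context {C : numClosedFieldType}.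

Lemma quad0 (x b : C) : 0 <= b ->
  (forall s : C, s \is Num.real -> 0 <= s * x + s ^+ 2 * b) -> x = 0.
Proof.
move=> b0 H.
have br : b \is Num.real by apply: ger0_real.
have xr : x \is Num.real.
  have := H 1 (real1 _); rewrite mul1r expr1n mul1r => /ger0_real xb.
  by have := realB xb br; rewrite addrK.
have b1 : b + 1 != 0 by rewrite gt_eqF // ltr_wpDl // ltr01.
set t := x / (b + 1).
have tr : t \is Num.real by rewrite realM // realV realD.
have xt : x = t * (b + 1) by rewrite /t divfK.
have := H (- t); rewrite realN => /(_ tr).
have -> : - t * x + (- t) ^+ 2 * b = - t ^+ 2 by rewrite xt; ring.
rewrite oppr_ge0 => t2le.
have t2ge : 0 <= t ^+ 2 by rewrite -realEsqr.
have : t ^+ 2 = 0 by apply/eqP; rewrite eq_le t2le t2ge.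
by move/eqP; rewrite expf_eq0 /= => /eqP t0; rewrite xt t0 mul0r.
Qed.

Variable n : nat.
Implicit Types (u v w : 'cV[C]_n) (A B : 'M[C]_n).

Lemma tcE m k (M : 'M[C]_(m, k)) i j : (M^t*) i j = (M j i)^*.
Proof. by rewrite !mxE. Qed.

Lemma outerE v w x y : (v *m w^t*) x y = v x 0 * (w y 0)^*.
Proof. by rewrite !mxE big_ord1 !mxE. Qed.

Lemma ipE u v : (u^t* *m v) 0 0 = \sum_x (u x 0)^* * v x 0.
Proof. by rewrite !mxE; apply: eq_bigr => x _; rewrite !mxE. Qed.

Lemma expvalE u A : expval u A = \sum_x \sum_y (u x 0)^* * A x y * u y 0.
Proof.
rewrite /expval mxE exchange_big /=; apply: eq_bigr => y _; rewrite mxE mulr_suml.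
by apply: eq_bigr => x _; rewrite !mxE.
Qed.

Lemma tr_outer v w : \tr (v *m w^t*) = (w^t* *m v) 0 0.
Proof.
rewrite ipE; apply: eq_bigr => x _; by rewrite outerE mulrC.
Qed.

Lemma psd_outer v : psdmx (v *m v^t*).
Proof.
split => [x y|a]; first by rewrite !outerE rmorphM /= conjCK mulrC.
have -> : \sum_x \sum_y (a x)^* * (v *m v^t*) x y * a y =
   (\sum_x (a x)^* * v x 0) * (\sum_x (a x)^* * v x 0)^*.
  rewrite rmorph_sum mulr_suml; apply: eq_bigr => x _.
  rewrite mulr_sumr; apply: eq_bigr => y _.
  by rewrite outerE rmorphM /= conjCK; ring.
exact: mul_conjC_ge0.
Qed.

Lemma psd0 : psdmx (0 : 'M[C]_n).
Proof.
split => [x y|a]; first by rewrite !mxE rmorph0.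
by rewrite big1 // => x _; rewrite big1 // => y _; rewrite mxE mulr0 mul0r.
Qed.

Lemma psdD A B : psdmx A -> psdmx B -> psdmx (A + B).
Proof.
move=> [hA pA] [hB pB]; split => [x y|a]; first by rewrite !mxE hA hB rmorphD.
have -> : \sum_x \sum_y (a x)^* * (A + B) x y * a y =
  \sum_x \sum_y (a x)^* * A x y * a y + \sum_x \sum_y (a x)^* * B x y * a y.
  rewrite -big_split; apply: eq_bigr => x _; rewrite -big_split.
  by apply: eq_bigr => y _; rewrite mxE mulrDr mulrDl.
exact: addr_ge0.
Qed.

Lemma psdZ c A : 0 <= c -> psdmx A -> psdmx (c *: A).
Proof.
move=> c0 [hA pA]; split => [x y|a]; first by rewrite !mxE rmorphM /= geC0_conj // -hA.
have -> : \sum_x \sum_y (a x)^* * (c *: A) x y * a y =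
  c * \sum_x \sum_y (a x)^* * A x y * a y.
  rewrite mulr_sumr; apply: eq_bigr => x _; rewrite mulr_sumr.
  by apply: eq_bigr => y _; rewrite mxE; ring.
exact: mulr_ge0.
Qed.

Lemma psd_sum (I : finType) (c : I -> C) (M : I -> 'M[C]_n) :
  (forall i, 0 <= c i) -> (forall i, psdmx (M i)) -> psdmx (\sum_i c i *: M i).
Proof.
move=> c0 M0; apply: (big_ind (@psdmx C n)) => //; [exact: psd0 | exact: psdD |].
by move=> i _; apply: psdZ.
Qed.

Lemma psd_expval u A : psdmx A -> 0 <= expval u A.
Proof. by move=> [_ pA]; rewrite expvalE; apply: (pA (fun x => u x 0)). Qed.

Lemma psd_diag A i : psdmx A -> 0 <= A i i.
Proof.
move=> [_ pA]; have := pA (fun x => (x == i)%:R).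
rewrite (bigD1 i) //= [X in _ + X]big1; last first.
  by move=> x xi; rewrite big1 // => y _; rewrite (negPf xi) rmorph0 !mul0r.
rewrite addr0 (bigD1 i) //= [X in _ + X]big1; last by move=> y yi; rewrite (negPf yi) mulr0.
by rewrite eqxx rmorph1 mul1r mulr1 addr0.
Qed.


Lemma tcD v w : (v + w)^t* = v^t* + w^t*.
Proof. by apply/matrixP => i j; rewrite !mxE rmorphD. Qed.

Lemma tcZ c v : (c *: v)^t* = c^* *: v^t*.
Proof. by apply/matrixP => i j; rewrite !mxE rmorphM. Qed.

Lemma outer_expand v w c :
  (v + c *: w) *m (v + c *: w)^t* = v *m v^t* + c^* *: (v *m w^t*)
     + c *: (w *m v^t*) + (c * c^*) *: (w *m w^t*).
Proof.
rewrite tcD tcZ mulmxDl !mulmxDr -!scalemxAl -!scalemxAr scalerA.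
by rewrite [c * _]mulrC !addrA.
Qed.

Definition linh m (h : 'M[C]_n -> 'M[C]_m) :=
  forall a A B, h (a *: A + B) = a *: h A + h B.

Lemma linh0 m (h : 'M[C]_n -> 'M[C]_m) : linh h -> h 0 = 0.
Proof.
move=> hl; have := hl 1 0 0; rewrite !scale1r addr0.
by move/(congr1 (fun x => x - h 0)); rewrite subrr addrK => <-.
Qed.

Lemma linhD m (h : 'M[C]_n -> 'M[C]_m) : linh h -> forall A B, h (A + B) = h A + h B.
Proof. by move=> hl A B; rewrite -{1}[A]scale1r hl scale1r. Qed.

Lemma linhZ m (h : 'M[C]_n -> 'M[C]_m) : linh h -> forall a A, h (a *: A) = a *: h A.
Proof. by move=> hl a A; rewrite -[a *: A]addr0 hl linh0 // addr0. Qed.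

Arguments linh0 {m h}.
Arguments linhD {m h}.
Arguments linhZ {m h}.

Lemma linh_sum m (h : 'M[C]_n -> 'M[C]_m) (I : finType) (F : I -> 'M[C]_n) :
  linh h -> h (\sum_i F i) = \sum_i h (F i).
Proof.
move=> hl; exact: (big_morph h (linhD hl) (linh0 hl)).
Qed.

Lemma delta_outer (k l : 'I_n) :
  delta_mx k l = (delta_mx k 0 : 'cV[C]_n) *m (delta_mx l 0 : 'cV[C]_n)^t*.
Proof.
apply/matrixP => x y; rewrite outerE !mxE.
by case: (x == k); case: (y == l); rewrite /= ?rmorph1 ?rmorph0 ?mulr1 ?mulr0 ?mul0r.
Qed.

Lemma polar0 m (h : 'M[C]_n -> 'M[C]_m) : linh h ->
  (forall v, h (v *m v^t*) = 0) -> forall A, h A = 0.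
Proof.
move=> hl h0.
have key : forall v w, h (v *m w^t*) = 0.
  move=> v w.
  have e c : c^* *: h (v *m w^t*) + c *: h (w *m v^t*) = 0.
    have := h0 (v + c *: w); rewrite outer_expand !linhD // !linhZ // !h0.
    by rewrite add0r scaler0 addr0.
  have e1 := e 1; have ei := e 'i.
  rewrite rmorph1 !scale1r in e1.
  have Y : h (w *m v^t*) = - h (v *m w^t*) by apply/eqP; rewrite -addr_eq0 addrC e1.
  rewrite Y conjCi scaleNr scalerN -opprD in ei.
  move/eqP: ei; rewrite oppr_eq0 -mulr2n -scaler_nat scalerA.
  rewrite scalemx_eq0 mulf_eq0 pnatr_eq0 /= => /orP[|/eqP //].
  by rewrite (negPf (neq0Ci _)).
move=> A; rewrite [A]matrix_sum_delta linh_sum //.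
rewrite big1 // => k _; rewrite linh_sum // big1 // => l _.
by rewrite linhZ // delta_outer key scaler0.
Qed.


Definition linf (g : 'M[C]_n -> C) := forall a A B, g (a *: A + B) = a * g A + g B.
Definition posf (g : 'M[C]_n -> C) := forall v, 0 <= g (v *m v^t*).

Lemma linf0 g : linf g -> g 0 = 0.
Proof.
move=> hl; have := hl 1 0 0; rewrite scale1r mul1r addr0.
by move/(congr1 (fun x => x - g 0)); rewrite subrr addrK => <-.
Qed.

Lemma linfD g : linf g -> forall A B, g (A + B) = g A + g B.
Proof. by move=> hl A B; rewrite -{1}[A]scale1r hl mul1r. Qed.

Lemma linfZ g : linf g -> forall a A, g (a *: A) = a * g A.
Proof. by move=> hl a A; rewrite -[a *: A]addr0 hl linf0 // addr0. Qed.

Lemma linf_sum g (I : finType) (P : pred I) (F : I -> 'M[C]_n) :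
  linf g -> g (\sum_(i | P i) F i) = \sum_(i | P i) g (F i).
Proof. move=> hl; exact: (big_morph g (linfD hl) (linf0 hl)). Qed.

Lemma null_lemma g u : linf g -> posf g -> g (u *m u^t*) = 0 ->
  forall w, g (u *m w^t*) = 0 /\ g (w *m u^t*) = 0.
Proof.
move=> hl hp h0 w.
set a := g (u *m w^t*); set c := g (w *m u^t*); set b := g (w *m w^t*).
have b0 : 0 <= b by apply: hp.
have E z : g ((u + z *: w) *m (u + z *: w)^t*) = z^* * a + z * c + z * z^* * b.
  by rewrite outer_expand !linfD // !linfZ // h0 add0r.
have S1 : a + c = 0.
  apply: (quad0 b0) => s sr.
  have := hp (u + s *: w); rewrite E conj_Creal //.
  by congr (_ <= _); ring.
have S2 : 'i * (c - a) = 0.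
  apply: (quad0 b0) => s sr.
  have := hp (u + (s * 'i) *: w); rewrite E rmorphM /= conj_Creal // conjCi.
  congr (_ <= _).
  have ii : 'i * 'i = -1 :> C by rewrite mulCii.
  rewrite -[s ^+ 2]mulr1 -[1]opprK -ii. ring.
have ca : c = a.
  move/eqP: S2; rewrite mulf_eq0 (negPf (neq0Ci _)) /= subr_eq0.
  by move/eqP.
have a0 : a = 0.
  move/eqP: S1; rewrite ca -mulr2n -mulr_natl mulf_eq0 pnatr_eq0 /=.
  by move/eqP.
by split; [|rewrite ca].
Qed.


Lemma spec_vec (rho : 'M[C]_n) : psdmx rho -> \tr rho = 1 ->
  exists u : 'cV[C]_n, (u^t* *m u) 0 0 = 1 /\
    forall g, linf g -> posf g -> g rho = 0 -> g (u *m u^t*) = 0.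
Proof.
move=> rpsd rtr.
have herm : rho \is hermsymmx.
  apply/is_hermitianmxP; rewrite expr0 scale1r; apply/matrixP => i j.
  by rewrite !mxE; case: rpsd => -> _.
have := hermitian_normalmx herm => /orthomx_spectralP.
set U := spectralmx rho; set D := spectral_diag rho.
have Uu : U \is unitarymx by apply: spectral_unitarymx.
rewrite invmx_unitary // => rhoE.
have UU : U *m U^t* = 1%:M by apply/unitarymxP.
have UtU : U^t* *m U = 1%:M by apply: mulmx1C.
set w := fun m : 'I_n => (row m U)^t*.
have wE m x : w m x 0 = (U m x)^*.
  by rewrite /w !mxE.
have decomp : rho = \sum_m D 0 m *: (w m *m (w m)^t*).
  apply/matrixP => x y; rewrite summxE {1}rhoE mul_mx_diag mxE.
  apply: eq_bigr => k _.
  by rewrite [in RHS]mxE outerE !wE !mxE conjCK; ring.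
have DE : diag_mx D = U *m rho *m U^t*.
  by rewrite rhoE !mulmxA UU mul1mx -mulmxA UU mulmx1.
have Dge m : 0 <= D 0 m.
  have -> : D 0 m = diag_mx D m m by rewrite mxE eqxx mulr1n.
  rewrite DE; have := psd_expval (w m) rpsd.
  rewrite expvalE mxE exchange_big /=.
  congr (_ <= _); apply: eq_bigr => j _; rewrite [(U *m rho) m j]mxE mulr_suml.
  apply: eq_bigr => i _; rewrite !wE conjCK [(U ^t*) j m]mxE [(U ^T) j m]mxE; ring.
have Dsum : \sum_m D 0 m = 1.
  by rewrite -mxtrace_diag DE mxtrace_mulC mulmxA UtU mul1mx.
have [m Dm] : exists m, D 0 m != 0.
  case: (pickP (fun m => D 0 m != 0)) => [m Dm|H]; first by exists m.
  move: Dsum; rewrite big1 => [|m _]; last by move: (H m) => /= /negbFE /eqP.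
  by move/eqP; rewrite eq_sym oner_eq0.
exists (w m); split.
  rewrite ipE; have := congr1 (fun M : 'M[C]_n => M m m) UU; rewrite !mxE eqxx mulr1n => <-.
  by apply: eq_bigr => x _; rewrite wE conjCK !mxE mulrC.
move=> g gl gp grho.
have : \sum_k D 0 k * g (w k *m (w k)^t*) = 0.
  rewrite -{2}grho [in RHS]decomp linf_sum //.
  by apply: eq_bigr => k _; rewrite linfZ.
move/psumr_eq0P => /(_ _ m) H.
have := H (fun k _ => mulr_ge0 (Dge k) (gp (w k))) isT.
by move/eqP; rewrite mulf_eq0 (negPf Dm) /= => /eqP.
Qed.

End Basic.

Section Tau.
Context {C : numClosedFieldType} (n : nat).
Local Notation N := n.+1.

Definition Fd (M : 'M[C]_N) (k : nat) : C :=
  if (k < N)%N then M (inord k) (inord k) else 0.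
Definition qd (M : 'M[C]_N) (k : nat) : C := (k.+1)%:R * (Fd M k - Fd M k.+1).

Lemma natS_neq0 (k : nat) : (k.+1)%:R != 0 :> C.
Proof. by rewrite pnatr_eq0. Qed.

Lemma tau_entry (j x y : 'I_N) :
  tau j x y = (x == y)%:R * ((x <= j)%:R / (j.+1)%:R :> C).
Proof.
rewrite /tau mxE summxE big_mkcond /= (bigD1 x) //= big1 => [|i ix]; last first.
  by case: ifP => // _; rewrite mxE eq_sym (negPf ix).
rewrite mxE eqxx /= addr0 [y == x]eq_sym.
by case: (x <= j)%N; case: (x == y); rewrite /= ?mulr1 ?mulr0 ?mul1r ?mul0r // mulrC.
Qed.

Lemma sum_tau_entry (c : 'I_N -> C) (x y : 'I_N) :
  (\sum_j c j *: tau j) x y = (x == y)%:R * \sum_j c j * ((x <= j)%:R / (j.+1)%:R).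
Proof.
rewrite summxE mulr_sumr; apply: eq_bigr => j _.
by rewrite mxE tau_entry; ring.
Qed.

Lemma sum_le (m j : nat) : (j < m)%N -> (\sum_(x < m) (x <= j)%N)%N = j.+1.
Proof.
elim: m => // m IH; rewrite big_ord_recr /= ltnS leq_eqVlt => /orP[/eqP<-|jm].
  rewrite leqnn addn1; congr _.+1.
  rewrite (eq_bigr (fun _ => 1%N)) => [|i _]; last by rewrite ltnW.
  by rewrite sum_nat_const card_ord muln1.
by rewrite IH // leqNgt jm addn0.
Qed.

Lemma tr_tau (j : 'I_N) : \tr (tau j) = 1 :> C.
Proof.
rewrite /mxtrace (eq_bigr (fun x : 'I_N => (x <= j)%:R / (j.+1)%:R)) => [|x _].
  by rewrite -mulr_suml -natr_sum sum_le // divff // natS_neq0.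
by rewrite tau_entry eqxx mul1r.
Qed.

Lemma sum_q_tau (M : 'M[C]_N) :
  \sum_(j < N) qd M j *: tau j = \matrix_(x, y) ((x == y)%:R * M x y).
Proof.
apply/matrixP => x y; rewrite sum_tau_entry mxE.
have -> : \sum_(j < N) qd M j * ((x <= j)%:R / (j.+1)%:R) = M x x.
  have -> : \sum_(j < N) qd M j * ((x <= j)%:R / (j.+1)%:R) =
            \sum_(j < N | (x <= j)%N) (Fd M j - Fd M j.+1).
    rewrite [RHS]big_mkcond /=; apply: eq_bigr => j _.
    case: (x <= j)%N; rewrite /qd ?mul0r ?mulr0 // mul1r mulrAC divff ?mul1r //.
    exact: natS_neq0.
  transitivity (\sum_(x <= j < N) (Fd M j - Fd M j.+1)).
    by rewrite big_geq_mkord; apply: eq_bigl => j.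
  have xN : (x <= N)%N by apply: ltnW.
  rewrite (@telescope_sumr_eq _ x N (fun k => - Fd M k) (fun k => Fd M k - Fd M k.+1) xN); last first.
    by move=> k _; rewrite opprK addrC.
  rewrite /Fd ltnn ltn_ord oppr0 sub0r opprK.
  by rewrite inord_val.
by case: eqP => [->|]; rewrite ?mul0r ?mul1r.
Qed.
Lemma sum_q (M : 'M[C]_N) : \sum_(j < N) qd M j = \tr M.
Proof.
have := congr1 mxtrace (sum_q_tau M).
rewrite raddf_sum /= (eq_bigr (fun j : 'I_N => qd M j)) => [->|j _]; last first.
  by rewrite mxtraceZ tr_tau mulr1.
by apply: eq_bigr => x _; rewrite mxE eqxx mul1r.
Qed.

Lemma Fd_tau (j : 'I_N) (k : nat) : Fd (tau j) k = (k <= j)%:R / (j.+1)%:R.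
Proof.
rewrite /Fd; case: ifP => kN; first by rewrite tau_entry eqxx mul1r inordK.
have /negbT : (k <= j)%N = false.
  by apply: negbTE; rewrite -ltnNge; apply: leq_trans (ltn_ord j) _; rewrite leqNgt kN.
by move=> /negbTE ->; rewrite mul0r.
Qed.

Lemma q_tau (j k : 'I_N) : qd (tau j) k = (k == j)%:R.
Proof.
rewrite /qd !Fd_tau -mulrBl.
case: (ltngtP k j) => [kj|jk|/val_inj ->].
- by rewrite subrr mul0r mulr0 -val_eqE /= (ltn_eqF kj).
- by rewrite subrr mul0r mulr0 -val_eqE /= (gtn_eqF jk).
- by rewrite subr0 eqxx /= mul1r mulfV // natS_neq0.
Qed.


Lemma psd_diagmx (d : 'rV[C]_N) : (forall i, 0 <= d 0 i) -> psdmx (diag_mx d).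
Proof.
move=> d0; rewrite diag_mx_sum_delta; apply: psd_sum => // i.
by rewrite delta_outer; apply: psd_outer.
Qed.

Lemma passive_entry (M : 'M[C]_N) : passive M ->
  [/\ M = \matrix_(x, y) ((x == y)%:R * M x y),
      forall x y : 'I_N, (x <= y)%N -> M y y <= M x x & psdmx M].
Proof.
move=> [[Mpsd _] [p [Mp Mdec]]]; split => //.
- apply/matrixP => x y.
  by rewrite Mp !mxE; case: eqP => _; rewrite ?mulr1n ?mulr0n ?mul1r ?mul0r.
- by move=> x y xy; rewrite Mp !mxE !eqxx !mulr1n; apply: Mdec.
Qed.

Lemma q_ge0 (M : 'M[C]_N) : passive M -> forall k : 'I_N, 0 <= qd M k.
Proof.
move=> /passive_entry [_ Mdec Mpsd] k; rewrite /qd; apply: mulr_ge0 => //.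
rewrite subr_ge0 /Fd ltn_ord inord_val; case: ifP => kN.
  by apply: Mdec; rewrite inordK.
exact: psd_diag.
Qed.

Lemma passive_sum (e : 'I_N -> C) : (forall j, 0 <= e j) -> \sum_j e j = 1 ->
  passive (\sum_j e j *: tau j).
Proof.
move=> e0 e1.
set p := fun x : 'I_N => \sum_j e j * ((x <= j)%:R / (j.+1)%:R).
have p0 x : 0 <= p x.
  by apply: sumr_ge0 => j _; apply: mulr_ge0 => //; apply: divr_ge0.
have SE : \sum_j e j *: tau j = diag_mx (\row_i p i).
  apply/matrixP => x y; rewrite sum_tau_entry !mxE mulr_natl.
  by case: eqP => [->|]; rewrite ?eqxx // eq_sym => /eqP/negPf->.
split; last first.
  exists p; split => // x y xy; apply: ler_sum => j _.
  apply: ler_wpM2l => //; apply: ler_wpM2r; first by rewrite invr_ge0.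
  rewrite ler_nat; case: (leqP y j) => // yj.
  by rewrite (leq_trans xy yj).
split; first by rewrite SE; apply: psd_diagmx => i; rewrite mxE.
rewrite raddf_sum /= -e1; apply: eq_bigr => j _.
by rewrite mxtraceZ tr_tau mulr1.
Qed.

Lemma passive_tau (j : 'I_N) : passive (tau j : 'M[C]_N).
Proof.
have := @passive_sum (fun k => (k == j)%:R).
have -> : \sum_(k < N) (k == j)%:R *: tau k = tau j :> 'M[C]_N.
  rewrite (bigD1 j) //= big1 => [|k kj]; last by rewrite (negPf kj) scale0r.
  by rewrite eqxx scale1r addr0.
apply => [k|]; first by rewrite ler0n.
rewrite (bigD1 j) //= big1 => [|k kj]; last by rewrite (negPf kj).
by rewrite eqxx addr0.
Qed.

End Tau.

Section More.
Context {C : numClosedFieldType} (n : nat).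
Implicit Types (u v w : 'cV[C]_n) (A B : 'M[C]_n).

Lemma mx11_mul (X : 'M[C]_(1, 1)) (Y : 'M[C]_(1, 1)) : (X *m Y) 0 0 = X 0 0 * Y 0 0.
Proof. by rewrite mxE big_ord1. Qed.

Lemma ip_ge0 v : 0 <= (v^t* *m v) 0 0.
Proof. by rewrite ipE; apply: sumr_ge0 => x _; rewrite mulrC mul_conjC_ge0. Qed.

Lemma ip_eq0 v : (v^t* *m v) 0 0 = 0 -> v = 0.
Proof.
rewrite ipE => S; apply/matrixP => x y; rewrite ord1 mxE.
have ge (i : 'I_n) : true -> 0 <= (v i 0)^* * v i 0.
  by move=> _; rewrite mulrC mul_conjC_ge0.
have := psumr_eq0P ge S (i := x) isT.
by move/eqP; rewrite mulf_eq0 conjC_eq0 orbb => /eqP.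
Qed.

Lemma state_of v : v != 0 -> is_state (((v^t* *m v) 0 0)^-1 *: (v *m v^t*)).
Proof.
move=> v0; have c0 : (v^t* *m v) 0 0 != 0 by apply: contra v0 => /eqP/ip_eq0 ->.
split; first by apply: psdZ; [rewrite invr_ge0 ip_ge0 | apply: psd_outer].
by rewrite mxtraceZ tr_outer mulVf.
Qed.

Lemma outer_scale v : v *m v^t* = (v^t* *m v) 0 0 *: (((v^t* *m v) 0 0)^-1 *: (v *m v^t*)).
Proof.
have [->|v0] := eqVneq v 0; first by rewrite mul0mx !scaler0.
have c0 : (v^t* *m v) 0 0 != 0 by apply: contra v0 => /eqP/ip_eq0 ->.
by rewrite scalerA mulfV // scale1r.
Qed.

Lemma states_span m (h : 'M[C]_n -> 'M[C]_m) : linh h ->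
  (forall rho, is_state rho -> h rho = 0) -> forall A, h A = 0.
Proof.
move=> hl hs; apply: polar0 => // v.
have [->|v0] := eqVneq v 0; first by rewrite mul0mx linh0.
by rewrite outer_scale linhZ // hs ?scaler0 //; apply: state_of.
Qed.

Lemma states_pos (g : 'M[C]_n -> C) : linf g -> (forall rho, is_state rho -> 0 <= g rho) -> posf g.
Proof.
move=> gl gs v.
have [->|v0] := eqVneq v 0; first by rewrite mul0mx linf0.
rewrite outer_scale linfZ //; apply: mulr_ge0; first exact: ip_ge0.
by apply: gs; apply: state_of.
Qed.

Lemma onb_ip (psi : 'I_n -> 'cV[C]_n) : orthonormal_basis psi ->
  forall k l, ((psi k)^t* *m psi l) 0 0 = (k == l)%:R.
Proof. by move=> on k l; rewrite on mxE mulr1n. Qed.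

Lemma onb_complete (psi : 'I_n -> 'cV[C]_n) : orthonormal_basis psi ->
  \sum_k psi k *m (psi k)^t* = 1%:M.
Proof.
move=> on; set U := \matrix_(x, k) psi k x 0.
have UtU : U^t* *m U = 1%:M.
  apply/matrixP => k l; rewrite [RHS]mxE -(onb_ip on) ipE mxE.
  by apply: eq_bigr => x _; rewrite !mxE.
have := mulmx1C UtU => UUt.
rewrite -UUt; apply/matrixP => x y; rewrite summxE mxE.
by apply: eq_bigr => k _; rewrite outerE !mxE.
Qed.

Lemma mul_mx11 m (v : 'M[C]_(m, 1)) (M : 'M[C]_1) : v *m M = M 0 0 *: v.
Proof. by rewrite {1}[M]mx11_scalar mul_mx_scalar. Qed.

Lemma onb_decomp (psi : 'I_n -> 'cV[C]_n) : orthonormal_basis psi -> forall A,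
  A = \sum_k \sum_l ((psi k)^t* *m A *m psi l) 0 0 *: (psi k *m (psi l)^t*).
Proof.
move=> on A.
transitivity ((\sum_k psi k *m (psi k)^t*) *m A *m (\sum_l psi l *m (psi l)^t*)).
  by rewrite (onb_complete on) mul1mx mulmx1.
rewrite -mulmxA mulmx_suml; apply: eq_bigr => k _; rewrite !mulmx_sumr.
apply: eq_bigr => l _; rewrite !mulmxA -(mulmxA (psi k) _ A).
by rewrite -(mulmxA (psi k) (_ *m A)) mul_mx11 scalemxAl.
Qed.

Lemma expval_linf u : linf (expval u).
Proof.
move=> a A B; rewrite /expval mulmxDr mulmxDl -scalemxAr -scalemxAl.
by rewrite mxE [X in X + _]mxE.
Qed.

Lemma expval_outer u v w : expval u (v *m w^t*) = (u^t* *m v) 0 0 * (w^t* *m u) 0 0.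
Proof. by rewrite /expval !mulmxA -mulmxA mx11_mul. Qed.

End More.

Theorem mainTheorem6 (C : numClosedFieldType) (d : nat) (hd : (0 < d)%N)
    (P : 'M[C]_d -> 'M[C]_d) :
  quantum_channel P ->
  ((forall sigma : 'M[C]_d,
       passive sigma <-> exists rho : 'M[C]_d, is_state rho /\ P rho = sigma)
   <->
   exists psi : 'I_d -> 'cV[C]_d,
     orthonormal_basis psi /\
     forall rho : 'M[C]_d, P rho = \sum_(j < d) expval (psi j) rho *: tau j).
Proof.
case: d hd P => [//|n] _ P [Plin Ptr _].
have Ph : linh P by move=> a A B; exact: Plin.
split; last first.
  move=> [psi [on HP]] sigma; split.
  - move=> sp; set q := qd sigma.
    set rho := \sum_(k < n.+1) q k *: (psi k *m (psi k)^t*).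
    have Prho : P rho = sigma.
      rewrite HP; have [sE _ _] := passive_entry sp.
      rewrite [RHS]sE -sum_q_tau; apply: eq_bigr => j _; congr (_ *: _).
      rewrite /rho linf_sum; last exact: expval_linf.
      rewrite (bigD1 j) //= big1 => [|k kj]; last first.
        rewrite linfZ; last exact: expval_linf.
        by rewrite expval_outer !(onb_ip on) eq_sym (negPf kj) mul0r mulr0.
      rewrite linfZ; last exact: expval_linf.
      by rewrite expval_outer !(onb_ip on) eqxx mulr1 mulr1 addr0.
    exists rho; split => //; split.
      apply: psd_sum => k; [exact: q_ge0 | exact: psd_outer].
    by rewrite -Ptr Prho; case: sp => [[]].
  - move=> [rho [[rpsd rtr] <-]]; rewrite HP; apply: passive_sum.
      by move=> j; apply: psd_expval.
    rewrite -rtr -Ptr HP raddf_sum /=; apply: eq_bigr => j _.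
    by rewrite mxtraceZ tr_tau mulr1.
move=> H.
have Hs rho : is_state rho -> passive (P rho).
  by move=> rs; apply/H; exists rho.
set g := fun (k : 'I_n.+1) (A : 'M[C]_n.+1) => qd (P A) k.
have gl k : linf (g k).
  move=> a A B; rewrite /g /qd /Fd Plin.
  by case: ifP; case: ifP => _ _; rewrite ?mxE; ring.
have HQ A : P A = \sum_k g k A *: tau k.
  apply/eqP; rewrite -subr_eq0; apply/eqP.
  pose h := fun A : 'M[C]_n.+1 => P A - \sum_k g k A *: tau k.
  have hl : linh h.
    move=> a A1 B1; rewrite /h Plin.
    rewrite (eq_bigr (fun k => a *: (g k A1 *: tau k) + g k B1 *: tau k)).
      by rewrite big_split /= -scaler_sumr scalerBr opprD addrACA.
    by move=> k _; rewrite gl scalerDl scalerA.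
  apply: (states_span hl) => rho rs; rewrite /h.
  have [PE _ _] := passive_entry (Hs rho rs).
  by rewrite {1}PE -sum_q_tau subrr.
have gpos k : posf (g k).
  apply: states_pos => // rho rs; exact: q_ge0 (Hs rho rs) k.
have gsum A : \sum_k g k A = \tr A by rewrite sum_q Ptr.
have hu j : exists u : 'cV[C]_n.+1, (u^t* *m u) 0 0 = 1 /\
    forall k, k != j -> g k (u *m u^t*) = 0.
  have [rho [[rpsd rtr] Prho]] := (H (tau j)).1 (passive_tau j).
  have [u [u1 uH]] := spec_vec rpsd rtr.
  exists u; split => // k kj; apply: uH => //.
  by rewrite /g Prho q_tau (negPf kj).
have [u uP] := fin_all_exists hu.
have gkl j k l : g j (u k *m (u l)^t*) = ((k == j) && (l == j))%:R.
  have [kj|kj] := eqVneq k j; last first.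
    have [_ /(_ j)] := uP k; rewrite eq_sym => /(_ kj) z.
    by case: (null_lemma (gl j) (gpos j) z (u l)) => -> _.
  have [lj|lj] := eqVneq l j; last first.
    have [_ /(_ j)] := uP l; rewrite eq_sym => /(_ lj) z.
    by case: (null_lemma (gl j) (gpos j) z (u k)) => _ ->; rewrite andbF.
  rewrite kj lj /= mulr1n.
  have := gsum (u j *m (u j)^t*); rewrite tr_outer (uP j).1 (bigD1 j) //=.
  rewrite big1 ?addr0 => [->//|k' k'j].
  by have [_ /(_ k')] := uP j; apply.
have on : orthonormal_basis u.
  move=> k l; apply/matrixP => a b; rewrite !ord1 [RHS]mxE mulr1n.
  rewrite -tr_outer -gsum (bigD1 l) //= big1 => [|j jl]; last first.
    by rewrite gkl eq_sym (negPf jl).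
  by rewrite gkl eqxx addr0.
exists u; split => // A; rewrite HQ; apply: eq_bigr => j _; congr (_ *: _).
transitivity (\sum_k \sum_l ((u k)^t* *m A *m u l) 0 0 * g j (u k *m (u l)^t*)).
  rewrite {1}(onb_decomp on A) linf_sum //; apply: eq_bigr => k _.
  by rewrite linf_sum //; apply: eq_bigr => l _; rewrite linfZ.
rewrite (bigD1 j) //= [X in _ + X]big1 => [|k kj]; last first.
  by rewrite big1 // => l _; rewrite gkl (negPf kj) mulr0.
rewrite addr0 (bigD1 j) //= [X in _ + X]big1 => [|l lj]; last first.
  by rewrite gkl (negPf lj) andbF mulr0.
by rewrite gkl eqxx mulr1 addr0.
Qed.
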